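(* Let $d$ be a positive integer and let $A\in\mathbb{R}^{[m]\times[2]}$ be a matrix that does not have an elimination ordering. Then there exists $b\in\mathbb{R}^{[m]}$ such that the solution graph $G(R(A,b))$ is not connected.
   Context: Fix a positive integer $d$ and let $D=\{0,1,\dots,d\}$; $[n]=\{1,\dots,n\}$. For $A\in\mathbb{R}^{[m]\times[n]}$ and $b\in\mathbb{R}^{[m]}$, $R(A,b)=\{x\in D^{[n]} : Ax\ge b\}$. For $R\subseteq D^{[n]}$, the solution graph $G(R)$ is the undirected graph with vertex set $R$ in which $x,y$ are adjacent iff they differ in exactly one coordinate. A matrix $A=(a_{ij})$ with column index set $J$ can be eliminated at column $j\in J$ if (i) for every row $i$ with $a_{ij}>0$ we have $a_{ij'}=0$ for all $j'\in J\setminus\{j\}$, or (ii) for every row $i$ with $a_{ij}<0$ we have $a_{ij'}=0$ for all $j'\in J\setminus\{j\}$. For $J'\subseteq[n]$, $\mathrm{elm}(A,J')$ is the submatrix of $A$ obtained by deleting the columns indexed by $J'$. A sequence $(j_1,\dots,j_n)$ of the elements of $[n]$ is an elimination ordering (EO) of $A$ if for every $t\in[n]$ the matrix $\mathrm{elm}(A,\{j_1,\dots,j_{t-1}\})$ can be eliminated at column $j_t$. *)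

(* Defs.v *)
From HB Require Import structures.
From mathcomp Require Import all_boot all_order all_algebra.
From mathcomp Require Import reals.
Set Implicit Arguments. Unset Strict Implicit. Unset Printing Implicit Defensive.
Import Order.TTheory GRing.Theory Num.Theory.
Local Open Scope ring_scope.

(* Points of D^[n] with D = {0,...,d} are finite functions 'I_n -> 'I_d.+1. *)
Definition point (d n : nat) := {ffun 'I_n -> 'I_d.+1}.

Definition sol_set (R : realType) (d m n : nat) (A : 'M[R]_(m, n)) (b : 'cV[R]_m)
  : {set point d n} :=
  [set x : point d n | [forall i : 'I_m,
     b i ord0 <= \sum_(j < n) A i j * ((nat_of_ord (x j))%:R)]].

Definition adj_pts (d n : nat) (x y : point d n) : bool :=
  #|[set j : 'I_n | x j != y j]| == 1%N.

Definition sol_graph_rel (d n : nat) (S : {set point d n}) : rel (point d n) :=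
  fun x y => [&& x \in S, y \in S & adj_pts x y].

Definition sol_graph_connected (d n : nat) (S : {set point d n}) : Prop :=
  forall x y, x \in S -> y \in S -> connect (sol_graph_rel S) x y.

(* The submatrix of A with remaining column index set J can be eliminated at
   column j \in J (rows are kept; only entries in columns of J matter). *)
Definition can_elim (R : realType) (m n : nat) (A : 'M[R]_(m, n))
  (J : {set 'I_n}) (j : 'I_n) : bool :=
  (j \in J) &&
  ([forall i : 'I_m, (0 < A i j) ==>
       [forall j' in J, (j' != j) ==> (A i j' == 0)]]
   || [forall i : 'I_m, (A i j < 0) ==>
       [forall j' in J, (j' != j) ==> (A i j' == 0)]]).

Definition is_EO (R : realType) (m n : nat) (A : 'M[R]_(m, n)) (s : seq 'I_n)
  : Prop :=
  perm_eq s (enum 'I_n) /\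
  forall (t : nat) (j0 : 'I_n), (t < n)%N ->
    can_elim A [set j : 'I_n | j \notin take t s] (nth j0 s t).

Definition has_EO (R : realType) (m n : nat) (A : 'M[R]_(m, n)) : Prop :=
  exists s : seq 'I_n, is_EO A s.

(* Main.v *)
Require Import Defs.
From HB Require Import structures.
From mathcomp Require Import all_boot all_order all_algebra.
From mathcomp Require Import reals.
From mathcomp Require Import lra.
Import Order.TTheory GRing.Theory Num.Theory.
Local Open Scope ring_scope.

Definition o1 : 'I_2 := @Ordinal 2 1 isT.

Definition mkpt (d a b : nat) : point d 2 :=
  [ffun j : 'I_2 => inord (if j == ord0 then a else b)].

Lemma mkpt0 d a b : (a <= d)%N -> nat_of_ord (mkpt d a b ord0) = a.
Proof. by move=> h; rewrite ffunE /= inordK. Qed.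

Lemma mkpt1 d a b : (b <= d)%N -> nat_of_ord (mkpt d a b o1) = b.
Proof. by move=> h; rewrite ffunE /= inordK. Qed.

Lemma sum2 (R : realType) m (A : 'M[R]_(m, 2)) l (x : 'I_2 -> nat) :
  \sum_(j < 2) A l j * (x j)%:R = A l ord0 * (x ord0)%:R + A l o1 * (x o1)%:R.
Proof.
rewrite big_ord_recl big_ord1.
by have -> : lift ord0 ord0 = o1 :> 'I_2 by apply: val_inj.
Qed.

Lemma adj_other d (x y : point d 2) :
  adj_pts x y -> x ord0 != y ord0 -> x o1 = y o1.
Proof.
move=> /eqP hc h0; apply/eqP; apply/negPn/negP => h1.
have : (#|[set ord0; o1]| <= #|[set j : 'I_2 | x j != y j]|)%N.
  apply: subset_leq_card; apply/subsetP => j; rewrite !inE.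
  by case/orP => /eqP ->.
by rewrite hc cards2.
Qed.

Lemma path_inv d (S : {set point d 2}) (P : pred (point d 2)) :
  (forall x y, sol_graph_rel S x y -> P x -> P y) ->
  forall x y, connect (sol_graph_rel S) x y -> P x -> P y.
Proof.
move=> H x y /connectP [s]; elim: s x => [|z s IH] x /=; first by move=> _ ->.
by move=> /andP[exz pz] ey Px; apply: (IH z pz ey); apply: H exz Px.
Qed.

Lemma not_conn (R : realType) d m (A : 'M[R]_(m, 2)) b p q :
  p \in sol_set d A b -> q \in sol_set d A b ->
  nat_of_ord (p ord0) = 0%N -> nat_of_ord (q ord0) <> 0%N ->
  (forall x y, x \in sol_set d A b -> y \in sol_set d A b -> adj_pts x y ->
     nat_of_ord (x ord0) = 0%N -> nat_of_ord (y ord0) <> 0%N ->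
     nat_of_ord (x o1) = nat_of_ord (y o1) -> False) ->
  ~ sol_graph_connected (sol_set d A b).
Proof.
move=> pS qS p0 q0 H C.
have cl : forall x y, sol_graph_rel (sol_set d A b) x y ->
    nat_of_ord (x ord0) == 0%N -> nat_of_ord (y ord0) == 0%N.
  move=> x y /and3P[xS yS a] /eqP x0.
  case: eqP => // y0; exfalso.
  apply: (H x y xS yS a x0 y0).
  rewrite (@adj_other d x y a) //; apply/eqP => e; apply: y0; by rewrite -e.
have := @path_inv d (sol_set d A b) (fun x : point d 2 => nat_of_ord (x ord0) == 0%N) cl p q (C p q pS qS).
by rewrite p0 => /(_ erefl)/eqP.
Qed.

Lemma memS (R : realType) d m (A : 'M[R]_(m, 2)) (f : 'I_m -> R) x :
  (x \in sol_set d A (\col_l f l)) =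
  [forall l, f l <= A l ord0 * (x ord0)%:R + A l o1 * (x o1)%:R].
Proof. by rewrite inE; apply: eq_forallb => l; rewrite mxE sum2. Qed.

Lemma case1 (R : realType) d m (A : 'M[R]_(m, 2)) i k : (0 < d)%N ->
  0 < A i ord0 -> 0 < A i o1 -> A k ord0 < 0 -> A k o1 < 0 ->
  exists b, ~ sol_graph_connected (sol_set d A b).
Proof.
move=> hd ai0 ai1 ak0 ak1.
pose p := mkpt d 0 1; pose q := mkpt d 1 0.
pose v l (x : point d 2) := A l ord0 * (x ord0)%:R + A l o1 * (x o1)%:R.
have p0 : nat_of_ord (p ord0) = 0%N by rewrite mkpt0.
have p1 : nat_of_ord (p o1) = 1%N by rewrite mkpt1.
have q0 : nat_of_ord (q ord0) = 1%N by rewrite mkpt0.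
have q1 : nat_of_ord (q o1) = 0%N by rewrite mkpt1.
exists (\col_l Num.min (v l p) (v l q)).
apply: (@not_conn R d m A _ p q).
- by rewrite memS; apply/forallP => l; rewrite ge_min lexx.
- by rewrite memS; apply/forallP => l; rewrite ge_min lexx orbT.
- by [].
- by rewrite q0.
move=> x y; rewrite !memS => /forallP Sx /forallP Sy _ x0 y0 e.
have := Sx i; have := Sy k; rewrite /v p0 p1 q0 q1 x0 -e.
have hy0 : 1 <= (y ord0)%:R :> R by rewrite ler1n lt0n; apply/eqP.
case: (posnP (x o1)) => [->|hx1].
  rewrite !ge_min => _ /orP[] ?; lra.
have hx1' : 1 <= (x o1)%:R :> R by rewrite ler1n.
rewrite !ge_min => /orP[] h1 _; nra.
Qed.

Lemma case2 (R : realType) d m (A : 'M[R]_(m, 2)) i k : (0 < d)%N ->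
  0 < A i ord0 -> A i o1 < 0 -> A k ord0 < 0 -> 0 < A k o1 ->
  exists b, ~ sol_graph_connected (sol_set d A b).
Proof.
case: d => [//|e] _ ai0 ai1 ak0 ak1.
pose p := mkpt e.+1 0 e; pose q := mkpt e.+1 1 e.+1.
pose v l (x : point e.+1 2) := A l ord0 * (x ord0)%:R + A l o1 * (x o1)%:R.
have p0 : nat_of_ord (p ord0) = 0%N by rewrite mkpt0.
have p1 : nat_of_ord (p o1) = e by rewrite mkpt1.
have q0 : nat_of_ord (q ord0) = 1%N by rewrite mkpt0.
have q1 : nat_of_ord (q o1) = e.+1 by rewrite mkpt1.
exists (\col_l Num.min (v l p) (v l q)).
apply: (@not_conn R e.+1 m A _ p q).
- by rewrite memS; apply/forallP => l; rewrite ge_min lexx.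
- by rewrite memS; apply/forallP => l; rewrite ge_min lexx orbT.
- by [].
- by rewrite q0.
move=> x y; rewrite !memS => /forallP Sx /forallP Sy _ x0 y0 e1.
have := Sx i; have := Sy k; rewrite /v p0 p1 q0 q1 x0 -e1.
have hy0 : 1 <= (y ord0)%:R :> R by rewrite ler1n lt0n; apply/eqP.
have he : (e.+1)%:R = e%:R + 1 :> R by rewrite -natr1.
rewrite he.
have hx := ltn_ord (x o1).
case: (ltngtP (x o1) e.+1) => [hx1|hx2|hx3].
2: by exfalso; move: hx hx2; rewrite ltnS leqNgt => /negP.
2: by rewrite hx3 he !ge_min => _ /orP[] ?; nra.
have hx1' : (x o1)%:R <= e%:R :> R by rewrite ler_nat -ltnS.
rewrite !ge_min => /orP[] h1 _; nra.
Qed.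

Lemma two (a b : 'I_2) : a != b -> forall j : 'I_2, (j == a) || (j == b).
Proof. by case: a b => [[|[|?]] ?] [[|[|?]] ?] //= _ [[|[|?]] ?]. Qed.

Lemma elim_of (R : realType) m (A : 'M[R]_(m, 2)) (c c' : 'I_2) : c != c' ->
  can_elim A [set j : 'I_2 | j \notin [::]] c -> has_EO A.
Proof.
move=> neq h; exists [:: c; c']; split.
  apply: uniq_perm; first by rewrite /= andbT inE.
    exact: enum_uniq.
  by move=> j; rewrite mem_enum !inE; exact: two.
move=> [|[|t]] j0 // _ /=.
rewrite /can_elim inE /= mem_seq1 eq_sym neq /=.
apply/orP; left; apply/forallP => i; apply/implyP => _.
apply/forallP => j; rewrite inE mem_seq1; apply/implyP => jc; apply/implyP => jc'.
by move: (@two c c' neq j); rewrite (negPf jc) (negPf jc').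
Qed.

Lemma no_elim (R : realType) m (A : 'M[R]_(m, 2)) (c c' : 'I_2) : c != c' ->
  ~~ can_elim A [set j : 'I_2 | j \notin [::]] c ->
  (exists i, 0 < A i c /\ A i c' != 0) /\ (exists i, A i c < 0 /\ A i c' != 0).
Proof.
move=> neq; rewrite /can_elim inE /= negb_or => /andP[/forallPn[i] h1 /forallPn[k] h2].
rewrite negb_imply in h1; rewrite negb_imply in h2.
case/andP: h1 => pos /forallPn[j]; rewrite negb_imply inE /= negb_imply => /andP[jc nz].
case/andP: h2 => neg /forallPn[j']; rewrite negb_imply inE /= negb_imply => /andP[jc' nz'].
have ej : j = c' by move: (@two c c' neq j); rewrite (negPf jc) => /eqP.
have ej' : j' = c' by move: (@two c c' neq j'); rewrite (negPf jc') => /eqP.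
by split; [exists i; rewrite -ej | exists k; rewrite -ej'].
Qed.

Theorem lemma5 (R : realType) (d m : nat) (hd : (0 < d)%N) (A : 'M[R]_(m, 2)) :
  ~ has_EO A ->
  exists b : 'cV[R]_m, ~ sol_graph_connected (sol_set d A b).
Proof.
move=> nEO.
have n01 : (ord0 : 'I_2) != o1 by [].
have n10 : (o1 : 'I_2) != ord0 by [].
have E0 : ~~ can_elim A [set j : 'I_2 | j \notin [::]] ord0.
  by apply/negP => h; apply: nEO; exact: (@elim_of R m A _ _ n01 h).
have E1 : ~~ can_elim A [set j : 'I_2 | j \notin [::]] o1.
  by apply/negP => h; apply: nEO; exact: (@elim_of R m A _ _ n10 h).
have [[r1 [r1a r1b]] [r2 [r2a r2b]]] := @no_elim R m A _ _ n01 E0.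
have [[r3 [r3a r3b]] [r4 [r4a r4b]]] := @no_elim R m A _ _ n10 E1.
have /orP[h1|h1] := lt_total r1b; have /orP[h2|h2] := lt_total r2b.
-
  have /orP[h3|h3] := lt_total r3b.
    exact: (@case2 R d m A _ _ hd r1a h1 h3 r3a).
  exact: (@case1 R d m A _ _ hd h3 r3a r2a h2).
- exact: (@case2 R d m A _ _ hd r1a h1 r2a h2).
- exact: (@case1 R d m A _ _ hd r1a h1 r2a h2).
-
  have /orP[h4|h4] := lt_total r4b.
    exact: (@case1 R d m A _ _ hd r1a h1 h4 r4a).
  exact: (@case2 R d m A _ _ hd h4 r4a r2a h2).
Qed.
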